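(* Let $\phi(z)=\sum_{j\in\mathbb{Z}}\phi_jz^j$ with $\sum_j|\phi_j|<\infty$, and set $\phi_+(z)=\sum_{j\ge0}\phi_jz^j$, $\phi_-(z)=\sum_{j<0}\phi_jz^j$. Then for every $t\in\mathbb{C}$ and $n\in\mathbb{N}$, $$\det\left(I+P_n\left(e^{tT(\phi)}-I\right)P_n\right)e^{-t\operatorname{Tr}P_nT(\phi)}=\det\left(I+P_n\left(e^{-tT(\phi_+)}e^{tT(\phi)}e^{-tT(\phi_-)}-I\right)P_n\right).$$
   Context: For a Laurent series $a(z)=\sum_ka_kz^k$, the Toeplitz matrix $T(a)$ on $\ell^2(\mathbb{N})$ has entries $T(a)_{j,k}=a_{j-k}$, $j,k\ge1$. $P_n$ is the orthogonal projection onto the first $n$ coordinates of $\ell^2(\mathbb{N})$. Determinants are Fredholm determinants. *)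

(* Defs.v *)
From Stdlib Require Import Reals ZArith ClassicalEpsilon.
Open Scope R_scope.

Definition Cplx : Type := (R * R)%type.
Definition Re (z : Cplx) : R := fst z.
Definition Im (z : Cplx) : R := snd z.
Definition C0 : Cplx := (0, 0).
Definition C1 : Cplx := (1, 0).
Definition RtoC (x : R) : Cplx := (x, 0).
Definition Cadd (z w : Cplx) : Cplx := (Re z + Re w, Im z + Im w).
Definition Copp (z : Cplx) : Cplx := (- Re z, - Im z).
Definition Csub (z w : Cplx) : Cplx := Cadd z (Copp w).
Definition Cmul (z w : Cplx) : Cplx :=
  (Re z * Re w - Im z * Im w, Re z * Im w + Im z * Re w).
Definition Cnorm (z : Cplx) : R := sqrt (Re z * Re z + Im z * Im z).
Fixpoint Cpow (z : Cplx) (k : nat) : Cplx :=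
  match k with O => C1 | S k' => Cmul z (Cpow z k') end.
Definition Cexp (z : Cplx) : Cplx := (exp (Re z) * cos (Im z), exp (Re z) * sin (Im z)).

Definition Cconv (u : nat -> Cplx) (l : Cplx) : Prop :=
  Un_cv (fun k => Re (u k)) (Re l) /\ Un_cv (fun k => Im (u k)) (Im l).

(* the limit of u (a classically chosen one; only meaningful if u converges) *)
Definition Clim (u : nat -> Cplx) : Cplx :=
  epsilon (inhabits C0) (fun l => Cconv u l).

Fixpoint Cpartial (u : nat -> Cplx) (N : nat) : Cplx :=
  match N with O => C0 | S N' => Cadd (Cpartial u N') (u N') end.

Definition Cseries (u : nat -> Cplx) : Cplx := Clim (Cpartial u).

Definition Csum (N : nat) (u : nat -> Cplx) : Cplx := Cpartial u N.

(* A Laurent series a(z) = sum_k a_k z^k is given by its coefficients a : Z -> Cplx. *)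
Definition abs_summable (a : Z -> Cplx) : Prop :=
  exists M : R, forall N : nat,
    sum_f_R0 (fun k => Cnorm (a (Z.of_nat k))) N
    + sum_f_R0 (fun k => Cnorm (a (- Z.of_nat (S k))%Z)) N <= M.

Definition sym_plus (a : Z -> Cplx) : Z -> Cplx :=
  fun j => if Z.leb 0 j then a j else C0.
Definition sym_minus (a : Z -> Cplx) : Z -> Cplx :=
  fun j => if Z.ltb j 0 then a j else C0.

(* Infinite matrices: entry (j,k) of an operator on l^2(N) w.r.t. the standard
   basis; index i : nat stands for the basis vector e_{i+1}. *)
Definition imat : Type := nat -> nat -> Cplx.

Definition Toep (a : Z -> Cplx) : imat := fun j k => a (Z.of_nat j - Z.of_nat k)%Z.

Definition delta (i j : nat) : Cplx := if Nat.eqb i j then C1 else C0.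

Definition mmul (A B : imat) : imat := fun j l => Cseries (fun m => Cmul (A j m) (B m l)).

Fixpoint mpow (A : imat) (k : nat) : imat :=
  match k with O => delta | S k' => mmul A (mpow A k') end.

Definition Cinv_fact (k : nat) : Cplx := RtoC (/ INR (fact k)).

Definition mexp (s : Cplx) (A : imat) : imat :=
  fun j l => Cseries (fun k => Cmul (Cmul (Cpow s k) (Cinv_fact k)) (mpow A k j l)).

Definition minor0 (f : nat -> nat -> Cplx) (j : nat) : nat -> nat -> Cplx :=
  fun a b => f (S a) (if Nat.ltb b j then b else S b).

Fixpoint Cdet (n : nat) (f : nat -> nat -> Cplx) : Cplx :=
  match n with
  | O => C1
  | S n' => Csum (S n') (fun j =>
       Cmul (Cmul (Cpow (Copp C1) j) (f 0%nat j)) (Cdet n' (minor0 f j)))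
  end.

(* Fredholm determinant det(I + P_n X P_n) = det of the n x n block (I + X)_{<n} *)
Definition det_IPnXPn (n : nat) (X : imat) : Cplx :=
  Cdet n (fun i j => Cadd (delta i j) (X i j)).

Definition trace_Pn (n : nat) (A : imat) : Cplx := Csum n (fun i => A i i).

Definition msub (A B : imat) : imat := fun i j => Csub (A i j) (B i j).

(* Main.v *)
Require Import Defs.
From Stdlib Require Import Reals ZArith Lia Lra ClassicalEpsilon FunctionalExtensionality.
From mathcomp Require all_boot all_algebra Rstruct complex ring.
From Coquelicot Require Coquelicot.
Module ST.
Open Scope R_scope.
Local Notation C0 := Defs.C0.
Local Notation C1 := Defs.C1.

Lemma Cpair_eq (z w : Cplx) : fst z = fst w -> snd z = snd w -> z = w.
Proof. destruct z, w; simpl; intros -> ->; reflexivity. Qed.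

Lemma Cadd_0_r z : Cadd z C0 = z.
Proof. apply Cpair_eq; unfold Cadd, Defs.C0, Re, Im; simpl; ring. Qed.
Lemma Cadd_0_l z : Cadd C0 z = z.
Proof. apply Cpair_eq; unfold Cadd, Defs.C0, Re, Im; simpl; ring. Qed.
Lemma Cmul_0_r z : Cmul z C0 = C0.
Proof. apply Cpair_eq; unfold Cmul, Defs.C0, Re, Im; simpl; ring. Qed.
Lemma Cmul_0_l z : Cmul C0 z = C0.
Proof. apply Cpair_eq; unfold Cmul, Defs.C0, Re, Im; simpl; ring. Qed.
Lemma Cmul_1_l z : Cmul C1 z = z.
Proof. apply Cpair_eq; unfold Cmul, Defs.C1, Re, Im; simpl; ring. Qed.

Lemma Cconv_unique u l1 l2 : Cconv u l1 -> Cconv u l2 -> l1 = l2.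
Proof.
intros [H1 H2] [H3 H4]. apply Cpair_eq.
- exact (UL_sequence _ _ _ H1 H3).
- exact (UL_sequence _ _ _ H2 H4).
Qed.

Lemma Clim_eq u l : Cconv u l -> Clim u = l.
Proof.
intros H. unfold Clim.
pose proof (epsilon_spec (inhabits C0) (fun l => Cconv u l) (ex_intro _ l H)) as H'.
exact (Cconv_unique _ _ _ H' H).
Qed.

Lemma Cconv_ev u l N : (forall m, (N <= m)%nat -> u m = l) -> Cconv u l.
Proof.
intros Hu. split; intros eps Heps; exists N; intros m Hm; rewrite (Hu m Hm);
  unfold R_dist; rewrite Rminus_diag, Rabs_R0; exact Heps.
Qed.

Lemma Cpartial_stable u N : (forall m, (N <= m)%nat -> u m = C0) ->
  forall M, (N <= M)%nat -> Cpartial u M = Cpartial u N.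
Proof.
intros Hu M HM. induction HM as [|M HM IH]; [reflexivity|].
simpl. rewrite IH, (Hu M HM). apply Cadd_0_r.
Qed.

Lemma Cseries_fin u N : (forall m, (N <= m)%nat -> u m = C0) -> Cseries u = Csum N u.
Proof.
intros Hu. unfold Cseries, Csum. apply Clim_eq. apply (Cconv_ev _ _ N).
apply Cpartial_stable; exact Hu.
Qed.

Lemma Cpartial_zero u N : (forall m, (m < N)%nat -> u m = C0) -> Cpartial u N = C0.
Proof.
induction N as [|N IH]; intros Hu; [reflexivity|].
simpl. rewrite IH by (intros; apply Hu; lia). rewrite Hu by lia. apply Cadd_0_r.
Qed.

Lemma Cseries_single u j : (forall m, m <> j -> u m = C0) -> Cseries u = u j.
Proof.
intros Hu. rewrite (Cseries_fin u (S j)) by (intros; apply Hu; lia).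
unfold Csum. simpl. rewrite Cpartial_zero by (intros; apply Hu; lia). apply Cadd_0_l.
Qed.

Lemma Cseries_zero u : (forall m, u m = C0) -> Cseries u = C0.
Proof. intros Hu. rewrite (Cseries_single u 0) by (intros; apply Hu). apply Hu. Qed.

Lemma Csum_ext f g N : (forall m, (m < N)%nat -> f m = g m) -> Csum N f = Csum N g.
Proof.
unfold Csum. induction N as [|N IH]; intros H; [reflexivity|].
simpl. rewrite IH by (intros; apply H; lia). rewrite H by lia. reflexivity.
Qed.

Definition lowerT (A : imat) := forall j k, (j < k)%nat -> A j k = C0.
Definition upperT (A : imat) := forall j k, (k < j)%nat -> A j k = C0.
Definition supperT (A : imat) := forall j k, (k <= j)%nat -> A j k = C0.

Lemma delta_neq i j : i <> j -> delta i j = C0.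
Proof. intros H. unfold delta. destruct (Nat.eqb_spec i j); [contradiction|reflexivity]. Qed.
Lemma delta_eq i : delta i i = C1.
Proof. unfold delta. rewrite Nat.eqb_refl. reflexivity. Qed.

Lemma mpow_lower A : lowerT A -> forall k, lowerT (mpow A k).
Proof.
intros HA k. induction k as [|k IH]; intros j l Hjl; simpl.
- apply delta_neq; lia.
- unfold mmul. apply Cseries_zero. intros m.
  destruct (Nat.le_gt_cases m j).
  + rewrite (IH m l) by lia. apply Cmul_0_r.
  + rewrite (HA j m) by lia. apply Cmul_0_l.
Qed.

Lemma mpow_lower_diag A : lowerT A -> forall k j, mpow A k j j = Cpow (A j j) k.
Proof.
intros HA k. induction k as [|k IH]; intros j; simpl.
- apply delta_eq.
- unfold mmul. rewrite (Cseries_single _ j), IH; [reflexivity|].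
  intros m Hm. destruct (proj1 (Nat.lt_gt_cases m j) Hm) as [H|H].
  + rewrite (mpow_lower A HA k m j) by lia. apply Cmul_0_r.
  + rewrite (HA j m) by lia. apply Cmul_0_l.
Qed.

Lemma mexp_lower s A : lowerT A -> lowerT (mexp s A).
Proof.
intros HA j l Hjl. unfold mexp. apply Cseries_zero. intros k.
rewrite (mpow_lower A HA k j l Hjl). apply Cmul_0_r.
Qed.

Lemma mexp_lower_diag s A j : lowerT A ->
  mexp s A j j = Cseries (fun k => Cmul (Cmul (Cpow s k) (Cinv_fact k)) (Cpow (A j j) k)).
Proof.
intros HA. unfold mexp. f_equal. apply functional_extensionality. intros k.
rewrite mpow_lower_diag by exact HA. reflexivity.
Qed.

Lemma supper_upper A : supperT A -> upperT A.
Proof. intros H j k Hjk. apply H. lia. Qed.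

Lemma mpow_upper A : upperT A -> forall k, upperT (mpow A k).
Proof.
intros HA k. induction k as [|k IH]; intros j l Hjl; simpl.
- apply delta_neq; lia.
- unfold mmul. apply Cseries_zero. intros m.
  destruct (Nat.le_gt_cases j m).
  + rewrite (IH m l) by lia. apply Cmul_0_r.
  + rewrite (HA j m) by lia. apply Cmul_0_l.
Qed.

Lemma mpow_supper_diag A : supperT A -> forall k j, mpow A (S k) j j = C0.
Proof.
intros HA k j. simpl. unfold mmul. apply Cseries_zero. intros m.
destruct (Nat.le_gt_cases m j).
- rewrite (HA j m) by lia. apply Cmul_0_l.
- rewrite (mpow_upper A (supper_upper A HA) k m j) by lia. apply Cmul_0_r.
Qed.

Lemma mexp_upper s A : upperT A -> upperT (mexp s A).
Proof.
intros HA j l Hjl. unfold mexp. apply Cseries_zero. intros k.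
rewrite (mpow_upper A HA k j l Hjl). apply Cmul_0_r.
Qed.

Lemma mexp_supper_diag s A j : supperT A -> mexp s A j j = C1.
Proof.
intros HA. unfold mexp. rewrite (Cseries_single _ 0).
- simpl. rewrite delta_eq. apply Cpair_eq; unfold Cmul, Cinv_fact, RtoC, Defs.C1, Re, Im; simpl;
  rewrite ?Rinv_1; ring.
- intros k Hk. destruct k as [|k]; [lia|]. rewrite mpow_supper_diag by exact HA. apply Cmul_0_r.
Qed.

Lemma triple_entry L A U n i j : lowerT L -> upperT U -> (i < n)%nat -> (j < n)%nat ->
  mmul (mmul L A) U i j =
  Csum n (fun m => Cmul (Csum n (fun l => Cmul (L i l) (A l m))) (U m j)).
Proof.
intros HL HU Hi Hj. unfold mmul at 1.
rewrite (Cseries_fin _ n).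
- apply Csum_ext. intros m _. f_equal. unfold mmul. apply Cseries_fin.
  intros l Hl. rewrite (HL i l) by lia. apply Cmul_0_l.
- intros m Hm. rewrite (HU m j) by lia. apply Cmul_0_r.
Qed.

Lemma Cexp_add z w : Cexp (Cadd z w) = Cmul (Cexp z) (Cexp w).
Proof.
apply Cpair_eq; unfold Cexp, Cadd, Cmul, Re, Im; simpl;
  rewrite exp_plus, ?cos_plus, ?sin_plus; ring.
Qed.

Lemma Cexp_0 : Cexp C0 = C1.
Proof.
apply Cpair_eq; unfold Cexp, Defs.C0, Defs.C1, Re, Im; simpl; rewrite exp_0, ?cos_0, ?sin_0; ring.
Qed.

Lemma Toep_plus_lower phi : lowerT (Toep (sym_plus phi)).
Proof.
intros j k Hjk. unfold Toep, sym_plus.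
replace (Z.leb 0 (Z.of_nat j - Z.of_nat k)) with false; [reflexivity|].
symmetry. apply Z.leb_gt. lia.
Qed.

Lemma Toep_minus_supper phi : supperT (Toep (sym_minus phi)).
Proof.
intros j k Hjk. unfold Toep, sym_minus.
replace (Z.ltb (Z.of_nat j - Z.of_nat k) 0) with false; [reflexivity|].
symmetry. apply Z.ltb_ge. lia.
Qed.

Lemma Toep_diag a j : Toep a j j = a 0%Z.
Proof. unfold Toep. rewrite Z.sub_diag. reflexivity. Qed.

Lemma sym_plus_0 phi : sym_plus phi 0%Z = phi 0%Z.
Proof. reflexivity. Qed.
End ST.

Module MC.
Import all_boot all_algebra Rstruct complex ring.
Import GRing.Theory Num.Theory.
Local Open Scope ring_scope.
Definition toK (z : Cplx) : R[i] := Complex (fst z) (snd z).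
Lemma toK_add z w : toK (Cadd z w) = toK z + toK w. Proof. by []. Qed.
Lemma toK_mul z w : toK (Cmul z w) = toK z * toK w. Proof. by []. Qed.
Lemma toK_opp z : toK (Copp z) = - toK z. Proof. by []. Qed.
Lemma toK_1 : toK Defs.C1 = 1. Proof. by []. Qed.
Lemma toK_0 : toK Defs.C0 = 0. Proof. by []. Qed.
Lemma toK_inj z w : toK z = toK w -> z = w.
Proof. by case: z w => [a b] [c d] [-> ->]. Qed.
Lemma toK_pow z k : toK (Cpow z k) = toK z ^+ k.
Proof. elim: k => [|k IH] //=; by rewrite toK_mul IH exprS. Qed.
Lemma toK_sum N u : toK (Csum N u) = \sum_(i < N) toK (u i).
Proof.
elim: N => [|N IH]; first by rewrite big_ord0.
by rewrite big_ord_recr /= -IH.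
Qed.
Lemma fact_eq k : Factorial.fact k = k`!.
Proof. elim: k => [|k IH] //=. by rewrite IH factS mulSn. Qed.
Lemma toK_invfact k : toK (Cinv_fact k) = (k`!%:R)^-1.
Proof.
have -> : toK (Cinv_fact k) = ((INR (Factorial.fact k))^-1)%:C%C by [].
by rewrite fmorphV /= INRE fact_eq rmorph_nat.
Qed.

Lemma binomK (X Y : R[i]) n : (X+Y)^+n * (n`!%:R)^-1 =
  \sum_(k < n.+1) (X^+k * (k`!%:R)^-1) * (Y^+(n-k) * ((n-k)`!%:R)^-1).
Proof.
rewrite addrC exprDn mulr_suml; apply: eq_bigr => -[k /= Hk] _.
have Hkn : (k <= n)%N by [].
have nz m : (m`!%:R : R[i]) != 0 by rewrite pnatr_eq0 -lt0n fact_gt0.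
rewrite -mulr_natr -[in X in _ * X^-1](bin_fact Hkn) !natrM.
have nzC : ('C(n, k)%:R : R[i]) != 0 by rewrite pnatr_eq0 -lt0n bin_gt0.
field.
by rewrite nzC nz nz.
Qed.

Lemma binom_C x y n : Cmul (Cpow (Cadd x y) n) (Cinv_fact n) =
  Csum (S n) (fun k => Cmul (Cmul (Cpow x k) (Cinv_fact k))
                             (Cmul (Cpow y (Nat.sub n k)) (Cinv_fact (Nat.sub n k)))).
Proof.
apply: toK_inj; rewrite toK_mul toK_pow toK_add toK_invfact toK_sum binomK.
apply: eq_bigr => k _; by rewrite !toK_mul !toK_pow !toK_invfact.
Qed.

Lemma ltb_ltn (b j : nat) : Nat.ltb b j = (b < j)%N.
Proof. apply/idP/idP; [move/Nat.ltb_lt/ltP | move/ltP/Nat.ltb_lt]; by []. Qed.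

Lemma Cdet_det n f : toK (Cdet n f) = \det (\matrix_(i < n, j < n) toK (f i j)).
Proof.
elim: n f => [|n IH] f; first by rewrite det_mx00.
rewrite -[Cdet n.+1 f]/(Csum n.+1 (fun j =>
       Cmul (Cmul (Cpow (Copp Defs.C1) j) (f 0%nat j)) (Cdet n (minor0 f j)))).
rewrite toK_sum (expand_det_row _ ord0). apply: eq_bigr => j _.
rewrite !toK_mul toK_pow toK_opp toK_1 IH /cofactor mxE add0n.
rewrite -mulrA mulrCA; congr (_ * (_ * \det _)).
apply/matrixP => a b; rewrite !mxE /minor0 /= ltb_ltn /bump.
by case: ltnP => H; rewrite ?add0n ?add1n.
Qed.
End MC.

Module EX.
Import Coquelicot.Coquelicot.
Open Scope R_scope.

Lemma Cpow_real a k : Defs.Cpow (a, 0) k = (a ^ k, 0).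
Proof.
induction k as [|k IH]; [reflexivity|]. simpl Defs.Cpow. rewrite IH.
unfold Defs.Cmul, Defs.Re, Defs.Im; simpl. apply f_equal2; ring.
Qed.

Lemma Cpow_imag_even b m : Defs.Cpow (0, b) (2*m) = ((-1)^m * b^(2*m), 0).
Proof.
induction m as [|m IH]; [simpl; apply f_equal2; ring|].
replace (2 * S m)%nat with (S (S (2*m))) by lia.
change (Defs.Cpow (0,b) (S (S (2*m)))) with (Defs.Cmul (0,b) (Defs.Cmul (0,b) (Defs.Cpow (0,b) (2*m)))).
rewrite IH. unfold Defs.Cmul, Defs.Re, Defs.Im; simpl. apply f_equal2; ring.
Qed.

Lemma Cpow_imag_odd b m : Defs.Cpow (0, b) (S (2*m)) = (0, (-1)^m * b^(S (2*m))).
Proof.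
change (Defs.Cpow (0,b) (S (2*m))) with (Defs.Cmul (0,b) (Defs.Cpow (0,b) (2*m))).
rewrite Cpow_imag_even. unfold Defs.Cmul, Defs.Re, Defs.Im; simpl. apply f_equal2; ring.
Qed.

Lemma sum_even (u : nat -> R) (Hu : forall m, u (S (2*m)) = 0) m :
  sum_f_R0 u (2*m) = sum_f_R0 (fun j => u (2*j)%nat) m /\
  sum_f_R0 u (S (2*m)) = sum_f_R0 (fun j => u (2*j)%nat) m.
Proof.
induction m as [|m [IH1 IH2]].
- rewrite tech5. rewrite Hu. simpl. split; ring.
- replace (2 * S m)%nat with (S (S (2*m))) by lia.
  assert (E : sum_f_R0 u (S (S (2*m))) = sum_f_R0 (fun j => u (2*j)%nat) (S m)).
  { rewrite tech5, IH2, tech5. replace (2 * S m)%nat with (S (S (2*m))) by lia. reflexivity. }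
  split; [exact E|]. rewrite tech5, E. replace (S (S (2*m))) with (2 * S m)%nat by lia.
  rewrite Hu. ring.
Qed.

Lemma sum_odd (u : nat -> R) (Hu : forall m, u (2*m)%nat = 0) m :
  sum_f_R0 u (S (2*m)) = sum_f_R0 (fun j => u (S (2*j))) m /\
  sum_f_R0 u (S (S (2*m))) = sum_f_R0 (fun j => u (S (2*j))) m.
Proof.
induction m as [|m [IH1 IH2]].
- assert (E : sum_f_R0 u (S (2*0)) = sum_f_R0 (fun j => u (S (2*j))) 0).
  { rewrite tech5. simpl. pose proof (Hu 0%nat) as H0. simpl in H0. rewrite H0. ring. }
  split; [exact E|]. rewrite tech5, E. replace (S (S (2*0))) with (2*1)%nat by lia.
  rewrite Hu. ring.
- assert (E : sum_f_R0 u (S (2 * S m)) = sum_f_R0 (fun j => u (S (2*j))) (S m)).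
  { replace (S (2 * S m)) with (S (S (S (2*m)))) by lia.
    rewrite tech5, IH2, tech5. replace (S (S (S (2*m)))) with (S (2 * S m)) by lia.
    reflexivity. }
  split; [exact E|]. rewrite tech5, E. replace (S (S (2 * S m))) with (2 * (S (S m)))%nat by lia.
  rewrite Hu. ring.
Qed.

Lemma interleave_even (u : nat -> R) l (Hu : forall m, u (S (2*m)) = 0) :
  infinite_sum (fun j => u (2*j)%nat) l -> infinite_sum u l.
Proof.
intros H eps Heps. destruct (H eps Heps) as [N HN]. exists (2*N)%nat. intros n Hn.
destruct (Nat.Even_or_Odd n) as [[m Hm]|[m Hm]]; subst n.
- rewrite (proj1 (sum_even u Hu m)). apply HN. lia.
- replace (2*m+1)%nat with (S (2*m)) by lia.
  rewrite (proj2 (sum_even u Hu m)). apply HN. lia.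
Qed.

Lemma interleave_odd (u : nat -> R) l (Hu : forall m, u (2*m)%nat = 0) :
  infinite_sum (fun j => u (S (2*j))) l -> infinite_sum u l.
Proof.
intros H eps Heps. destruct (H eps Heps) as [N HN]. exists (S (2*N))%nat. intros n Hn.
destruct (Nat.Even_or_Odd n) as [[m Hm]|[m Hm]]; subst n.
- destruct m as [|m]; [lia|].
  replace (2 * S m)%nat with (S (S (2*m))) by lia.
  rewrite (proj2 (sum_odd u Hu m)). apply HN. lia.
- replace (2*m+1)%nat with (S (2*m)) by lia.
  rewrite (proj1 (sum_odd u Hu m)). apply HN. lia.
Qed.

Definition Aa (a : R) (k : nat) : R := a ^ k * / INR (fact k).
Definition cb (b : R) (k : nat) : R := fst (Defs.Cpow (0, b) k) * / INR (fact k).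
Definition sb (b : R) (k : nat) : R := snd (Defs.Cpow (0, b) k) * / INR (fact k).

Lemma fact_pos k : 0 < INR (fact k).
Proof. apply lt_0_INR. apply lt_O_fact. Qed.

Lemma Aa_series a : is_series (Aa a) (exp a).
Proof.
eapply is_series_ext; [|apply (is_exp_Reals a)].
intros k. simpl. rewrite pow_n_pow. reflexivity.
Qed.

Lemma Aa_abs a k : Rabs (Aa a k) = Aa (Rabs a) k.
Proof.
unfold Aa. rewrite Rabs_mult, Rabs_inv, <- RPow_abs.
rewrite (Rabs_right (INR (fact k))); [reflexivity|]. left; apply fact_pos.
Qed.

Lemma Aa_ex_abs a : ex_series (fun k => Rabs (Aa a k)).
Proof.
exists (exp (Rabs a)). eapply is_series_ext; [|apply Aa_series].
intros k; symmetry; apply Aa_abs.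
Qed.

Lemma Cpow_imag_bound b k :
  Rabs (fst (Defs.Cpow (0, b) k)) <= Rabs b ^ k /\ Rabs (snd (Defs.Cpow (0, b) k)) <= Rabs b ^ k.
Proof.
destruct (Nat.Even_or_Odd k) as [[m Hm]|[m Hm]]; subst k.
- rewrite Cpow_imag_even. cbn [fst snd]. rewrite Rabs_R0, Rabs_mult, pow_1_abs, Rmult_1_l, <- RPow_abs.
  split; [right; reflexivity|]. apply pow_le, Rabs_pos.
- replace (2*m+1)%nat with (S (2*m)) by lia. rewrite Cpow_imag_odd. cbn [fst snd].
  rewrite Rabs_R0, Rabs_mult, pow_1_abs, Rmult_1_l, <- RPow_abs.
  split; [apply pow_le, Rabs_pos| right; reflexivity].
Qed.

Lemma cb_ex_abs b : ex_series (fun k => Rabs (cb b k)).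
Proof.
apply (@ex_series_le R_AbsRing R_CompleteNormedModule (fun k => Rabs (cb b k)) (Aa (Rabs b))).
- intros k. change (norm (Rabs (cb b k))) with (Rabs (Rabs (cb b k))).
  rewrite Rabs_Rabsolu. unfold cb, Aa. rewrite Rabs_mult, Rabs_inv.
  rewrite (Rabs_right (INR (fact k))) by (left; apply fact_pos).
  apply Rmult_le_compat_r; [left; apply Rinv_0_lt_compat, fact_pos|].
  apply Cpow_imag_bound.
- exists (exp (Rabs b)). apply Aa_series.
Qed.

Lemma sb_ex_abs b : ex_series (fun k => Rabs (sb b k)).
Proof.
apply (@ex_series_le R_AbsRing R_CompleteNormedModule (fun k => Rabs (sb b k)) (Aa (Rabs b))).
- intros k. change (norm (Rabs (sb b k))) with (Rabs (Rabs (sb b k))).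
  rewrite Rabs_Rabsolu. unfold sb, Aa. rewrite Rabs_mult, Rabs_inv.
  rewrite (Rabs_right (INR (fact k))) by (left; apply fact_pos).
  apply Rmult_le_compat_r; [left; apply Rinv_0_lt_compat, fact_pos|].
  apply Cpow_imag_bound.
- exists (exp (Rabs b)). apply Aa_series.
Qed.

Lemma cb_series b : is_series (cb b) (cos b).
Proof.
apply is_series_Reals. apply interleave_even.
- intros m. unfold cb. rewrite Cpow_imag_odd. simpl. ring.
- assert (H : cos_in (Rsqr b) (cos b)).
  { unfold cos. destruct (exist_cos (Rsqr b)) as [l Hl]. exact Hl. }
  intros eps Heps. destruct (H eps Heps) as [N HN]. exists N. intros n Hn.
  erewrite sum_eq; [apply HN; exact Hn|].
  intros i _. unfold cb, cos_n. rewrite Cpow_imag_even. cbn [fst].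
  rewrite pow_mult. unfold Rsqr. replace (b^2) with (b*b) by ring. unfold Rdiv. ring.
Qed.

Lemma zero_series (u : nat -> R) : (forall i, u i = 0) -> infinite_sum u 0.
Proof.
intros Hu eps Heps. exists 0%nat. intros n _. rewrite (sum_eq _ (fun _ => 0)) by (intros; apply Hu).
rewrite sum_cte. unfold R_dist. rewrite Rmult_0_l, Rminus_0_r, Rabs_R0. exact Heps.
Qed.

Lemma sb_series b : is_series (sb b) (sin b).
Proof.
apply is_series_Reals. apply interleave_odd.
- intros m. unfold sb. rewrite Cpow_imag_even. simpl. ring.
- destruct (Req_dec b 0) as [Hb0|Hb].
  + subst b. rewrite sin_0. apply zero_series. intros i. unfold sb. rewrite Cpow_imag_odd.
    cbn [snd]. simpl. ring.
  + assert (H : sin_in (Rsqr b) (sin b / b)).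
    { unfold sin. destruct (exist_sin (Rsqr b)) as [l Hl].
      replace (b * l / b) with l by (field; exact Hb). exact Hl. }
    assert (H' : is_series (fun i => b * (sin_n i * Rsqr b ^ i)) (b * (sin b / b))).
    { exact (is_series_scal b _ _ (proj2 (is_series_Reals _ _) H)). }
    replace (sin b) with (b * (sin b / b)) by (field; exact Hb).
    apply is_series_Reals in H'. intros eps Heps. destruct (H' eps Heps) as [N HN].
    exists N. intros n Hn. erewrite sum_eq; [apply HN; exact Hn|].
    intros i _. unfold sb, sin_n. rewrite Cpow_imag_odd. cbn [snd].
    rewrite Nat.add_1_r. change (b ^ S (2*i)) with (b * b ^ (2*i)).
    rewrite pow_mult. unfold Rsqr. replace (b^2) with (b*b) by ring. unfold Rdiv. ring.
Qed.

Lemma fst_Cpartial (v : nat -> Cplx) n :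
  fst (Cpartial v (S n)) = sum_f_R0 (fun k => fst (v k)) n /\
  snd (Cpartial v (S n)) = sum_f_R0 (fun k => snd (v k)) n.
Proof.
induction n as [|n [IH1 IH2]].
- simpl. unfold Defs.Cadd, Defs.Re, Defs.Im, Defs.C0. simpl. split; ring.
- change (Cpartial v (S (S n))) with (Defs.Cadd (Cpartial v (S n)) (v (S n))).
  unfold Defs.Cadd, Defs.Re, Defs.Im. cbn [fst snd]. rewrite IH1, IH2. split; reflexivity.
Qed.

Lemma term_parts z n :
  fst (Defs.Cmul (Defs.Cpow z n) (Cinv_fact n)) = sum_f_R0 (fun k => Aa (fst z) k * cb (snd z) (n-k)) n /\
  snd (Defs.Cmul (Defs.Cpow z n) (Cinv_fact n)) = sum_f_R0 (fun k => Aa (fst z) k * sb (snd z) (n-k)) n.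
Proof.
destruct z as [a b]. cbn [fst snd].
replace (a, b) with (Defs.Cadd (a, 0) (0, b))
  by (unfold Defs.Cadd, Defs.Re, Defs.Im; cbn [fst snd]; apply f_equal2; ring).
rewrite MC.binom_C. unfold Csum. rewrite (proj1 (fst_Cpartial _ n)), (proj2 (fst_Cpartial _ n)). split; apply sum_eq; intros k _; rewrite Cpow_real;
  unfold Defs.Cmul, Cinv_fact, Defs.RtoC, Defs.Re, Defs.Im, Aa, cb, sb; cbn [fst snd]; ring.
Qed.

Lemma shift_cv (u : nat -> R) f l :
  (forall n, u (S n) = sum_f_R0 f n) -> infinite_sum f l -> Un_cv u l.
Proof.
intros Hu H eps Heps. destruct (H eps Heps) as [N HN]. exists (S N). intros n Hn.
destruct n as [|n]; [lia|]. rewrite Hu. apply HN. lia.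
Qed.

Lemma Cexp_series z :
  Cconv (Cpartial (fun k => Defs.Cmul (Defs.Cpow z k) (Cinv_fact k))) (Defs.Cexp z).
Proof.
split.
- apply (shift_cv _ (fun n => sum_f_R0 (fun k => Aa (fst z) k * cb (snd z) (n-k)) n)).
  + intros n. unfold Defs.Re. rewrite (proj1 (fst_Cpartial _ n)). apply sum_eq.
    intros i _. apply term_parts.
  + apply is_series_Reals.
    exact (is_series_mult _ _ _ _ (Aa_series _) (cb_series _) (Aa_ex_abs _) (cb_ex_abs _)).
- apply (shift_cv _ (fun n => sum_f_R0 (fun k => Aa (fst z) k * sb (snd z) (n-k)) n)).
  + intros n. unfold Defs.Im. rewrite (proj2 (fst_Cpartial _ n)). apply sum_eq.
    intros i _. apply term_parts.
  + apply is_series_Reals.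
    exact (is_series_mult _ _ _ _ (Aa_series _) (sb_series _) (Aa_ex_abs _) (sb_ex_abs _)).
Qed.
End EX.

Module FIN.
Import all_boot all_algebra Rstruct complex ring.
Import GRing.Theory Num.Theory.
Import MC ST.
Local Open Scope ring_scope.

Lemma exp_trace (phi : Z -> Cplx) t n :
  toK (Cexp (Copp (Cmul t (trace_Pn n (Toep phi))))) =
  toK (Cexp (Cmul (Copp t) (phi Z0))) ^+ n.
Proof.
have -> : trace_Pn n (Toep phi) = Csum n (fun _ => phi Z0).
  by apply: Csum_ext => m _; rewrite Toep_diag.
elim: n => [|n IH].
  have -> : Copp (Cmul t (Csum 0 (fun _ => phi Z0))) = Defs.C0.
    by apply: toK_inj; rewrite toK_opp toK_mul toK_0 mulr0 oppr0.
  by rewrite Cexp_0 toK_1 expr0.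
have -> : Copp (Cmul t (Csum n.+1 (fun _ => phi Z0))) =
   Cadd (Copp (Cmul t (Csum n (fun _ => phi Z0)))) (Cmul (Copp t) (phi Z0)).
  apply: toK_inj; rewrite toK_add !toK_opp !toK_mul.
  rewrite -[Csum n.+1 _]/(Cadd (Csum n (fun _ => phi Z0)) (phi Z0)) toK_add.
  rewrite toK_opp; ring.
by rewrite Cexp_add toK_mul IH exprSr.
Qed.

Lemma main (phi : Z -> Cplx) (t : Cplx) (n : nat) :
  Cmul (det_IPnXPn n (msub (mexp t (Toep phi)) delta))
       (Cexp (Copp (Cmul t (trace_Pn n (Toep phi)))))
  = det_IPnXPn n
      (msub (mmul (mmul (mexp (Copp t) (Toep (sym_plus phi)))
                        (mexp t (Toep phi)))
                  (mexp (Copp t) (Toep (sym_minus phi))))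
            delta).
Proof.
set E := mexp t (Toep phi).
set L := mexp (Copp t) (Toep (sym_plus phi)).
set U := mexp (Copp t) (Toep (sym_minus phi)).
have HL : lowerT L := mexp_lower _ _ (Toep_plus_lower phi).
have HU : upperT U := mexp_upper _ _ (supper_upper _ (Toep_minus_supper phi)).
set d := Cexp (Cmul (Copp t) (phi Z0)).
have Ld j : L j j = d.
  rewrite /L mexp_lower_diag ?Toep_diag; last exact: Toep_plus_lower.
  rewrite sym_plus_0 /Cseries; apply: Clim_eq.
  have -> : (fun k => Cmul (Cmul (Cpow (Copp t) k) (Cinv_fact k)) (Cpow (phi Z0) k)) =
            (fun k => Cmul (Cpow (Cmul (Copp t) (phi Z0)) k) (Cinv_fact k)).
    apply: functional_extensionality => k; apply: toK_inj.
    by rewrite !toK_mul !toK_pow toK_mul exprMn mulrAC.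
  exact: EX.Cexp_series.
have Ud j : U j j = Defs.C1 := mexp_supper_diag _ _ _ (Toep_minus_supper phi).
apply: toK_inj; rewrite toK_mul /det_IPnXPn !Cdet_det.
set Ek := \matrix_(i < n, j < n) toK (E i j).
set Lk := \matrix_(i < n, j < n) toK (L i j).
set Uk := \matrix_(i < n, j < n) toK (U i j).
have -> : \matrix_(i < n, j < n) toK (Cadd (delta i j) (msub E delta i j)) = Ek.
  apply/matrixP => i j; rewrite !mxE /msub /Csub !toK_add toK_opp.
  by rewrite addrC subrK.
have -> : \matrix_(i < n, j < n) toK (Cadd (delta i j) (msub (mmul (mmul L E) U) delta i j))
          = Lk *m Ek *m Uk.
  apply/matrixP => i j; rewrite !mxE /msub /Csub !toK_add toK_opp addrC subrK.
  rewrite (triple_entry L E U n i j HL HU); [|exact/ltP/ltn_ord|exact/ltP/ltn_ord].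
  rewrite toK_sum; apply: eq_bigr => m _; rewrite toK_mul toK_sum !mxE.
  congr (_ * _); apply: eq_bigr => l _; by rewrite !mxE toK_mul.
rewrite !det_mulmx.
have -> : \det Lk = toK d ^+ n.
  rewrite det_trig; last first.
    apply/is_trig_mxP => i j Hij; rewrite mxE HL ?toK_0 //; exact/ltP.
  under eq_bigr do rewrite mxE Ld.
  by rewrite prodr_const card_ord.
have -> : \det Uk = 1.
  rewrite -det_tr det_trig; last first.
    apply/is_trig_mxP => i j Hij; rewrite !mxE HU ?toK_0 //; exact/ltP.
  under eq_bigr do rewrite !mxE Ud toK_1.
  by rewrite prodr_const expr1n.
by rewrite exp_trace mulr1 mulrC.
Qed.
End FIN.

Theorem lemma4p2 (phi : Z -> Cplx) (Hphi : abs_summable phi) (t : Cplx) (n : nat) :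
  Cmul (det_IPnXPn n (msub (mexp t (Toep phi)) delta))
       (Cexp (Copp (Cmul t (trace_Pn n (Toep phi)))))
  = det_IPnXPn n
      (msub (mmul (mmul (mexp (Copp t) (Toep (sym_plus phi)))
                        (mexp t (Toep phi)))
                  (mexp (Copp t) (Toep (sym_minus phi))))
            delta).
Proof. exact (FIN.main phi t n). Qed.
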